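(* Let $(X,\mathcal{A})$ be a measurable space, $f_1,f_2\in\mathcal{F}^{(X,\mathcal{A})}$ comonotone, and $\star:[0,\infty)^2\to[0,\infty)$ continuous, non-decreasing in both arguments and bounded from above by the minimum ($a\star b\le\min(a,b)$). Let $\omega_j,\xi_j\in(0,\infty)$, $j=0,1,2$, be such that $x^{1/(\xi_0\omega_0)}\le x\le x^{1/(\xi_i\omega_i)}$ and $x\ge x^{\omega_i/\omega_0}$ for all $x\in[0,\infty)$ and $i=1,2$, and let $m\in\mathcal{M}^{(X,\mathcal{A})}$ be a monotone measure with $\mathbf{Su}(m,f_i^{\xi_i})<\infty$, $i=1,2$. Then \[ \big[\mathbf{Su}\big(m,(f_1\star f_2)^{\xi_0}\big)\big]^{\omega_0}\ \ge\ \big[\mathbf{Su}(m,f_1^{\xi_1})\big]^{\omega_1}\star\big[\mathbf{Su}(m,f_2^{\xi_2})\big]^{\omega_2}. \]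
   Context: A monotone measure on $(X,\mathcal{A})$ is $m:\mathcal{A}\to[0,\infty]$ with $m(\emptyset)=0$, $m(X)>0$, $m(A)\le m(B)$ for $A\subseteq B$; $\mathcal{M}^{(X,\mathcal{A})}$ is the set of these; $\mathcal{F}^{(X,\mathcal{A})}$ the set of $\mathcal{A}$-measurable $f:X\to[0,\infty]$. $\mathbf{Su}(m,f)=\sup\{\min(t,m(\{f\ge t\})) : t\in(0,\infty]\}$. $f_1,f_2$ are comonotone if $(f_1(x)-f_1(y))(f_2(x)-f_2(y))\ge0$ for all $x,y$. Operations on functions are pointwise. *)

(* Defs.v *)
From HB Require Import structures.
From mathcomp Require Import all_boot all_order all_algebra.
From mathcomp Require Import all_classical all_reals all_analysis.
From mathcomp Require Import lebesgue_measure measurable_realfun.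
Set Implicit Arguments. Unset Strict Implicit. Unset Printing Implicit Defensive.
Import Order.TTheory GRing.Theory Num.Theory.
Import numFieldNormedType.Exports.
Local Open Scope classical_set_scope.
Local Open Scope ring_scope.

(* A monotone measure on (X, A): m : A -> [0, +oo], m(empty) = 0, m(X) > 0,
   monotone w.r.t. inclusion of measurable sets.  (Values of m on
   non-measurable sets are irrelevant.) *)
Definition monotone_measure (d : measure_display) (X : measurableType d)
    (R : realType) (m : set X -> \bar R) : Prop :=
  [/\ (forall A, measurable A -> (0 <= m A)%E),
      m set0 = 0%E,
      (0 < m setT)%E &
      (forall A B, measurable A -> measurable B -> A `<=` B -> (m A <= m B)%E)].

Definition nonneg_measurable (d : measure_display) (X : measurableType d)
    (R : realType) (f : X -> \bar R) : Prop :=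
  measurable_fun setT f /\ (forall x, (0 <= f x)%E).

Definition Su (d : measure_display) (X : measurableType d) (R : realType)
    (m : set X -> \bar R) (f : X -> \bar R) : \bar R :=
  ereal_sup [set Order.min t (m [set x | (t <= f x)%E]) | t in [set t : \bar R | (0 < t)%E]].

(* Comonotonicity: (f1 x - f1 y)(f2 x - f2 y) >= 0 for all x, y, written in
   the order form (valid also for the value +oo): it is never the case that
   f1 x < f1 y while f2 y < f2 x. *)
Definition comonotone (X : Type) (R : realType) (f1 f2 : X -> \bar R) : Prop :=
  forall x y, ~ ((f1 x < f1 y)%E /\ (f2 y < f2 x)%E).

(* Extension of a binary operation s on [0,oo) to [0,oo] by monotone limits
   (s is non-decreasing, so these sups are the limits). *)
Definition estar (R : realType) (s : R -> R -> R) (a b : \bar R) : \bar R :=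
  match a, b with
  | a'%:E, b'%:E => (s a' b')%:E
  | a'%:E, +oo%E => ereal_sup [set (s a' n%:R)%:E | n in [set: nat]]
  | +oo%E, b'%:E => ereal_sup [set (s n%:R b')%:E | n in [set: nat]]
  | +oo%E, +oo%E => ereal_sup [set (s n%:R n%:R)%:E | n in [set: nat]]
  | _, _ => 0%E
  end.

Definition star_hyp (R : realType) (s : R -> R -> R) : Prop :=
  [/\ {within [set p : R * R | 0 <= p.1 /\ 0 <= p.2],
        continuous (fun p : R * R => s p.1 p.2)},
      (forall a a' b b', 0 <= a -> 0 <= b -> a <= a' -> b <= b' ->
          s a b <= s a' b'),
      (forall a b, 0 <= a -> 0 <= b -> 0 <= s a b) &
      (forall a b, 0 <= a -> 0 <= b -> s a b <= Num.min a b)].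

(* Main.v *)
Require Import Defs.
From HB Require Import structures.
From mathcomp Require Import all_boot all_order all_algebra.
From mathcomp Require Import all_classical all_reals all_analysis.
From mathcomp Require Import lebesgue_measure measurable_realfun.
From mathcomp Require Import lra.
Import Order.TTheory GRing.Theory Num.Theory.
Import numFieldNormedType.Exports.
Local Open Scope classical_set_scope.
Local Open Scope ring_scope.

Section Aux.
Variable R : realType.

Lemma cont_lb (s : R -> R -> R) (a b c : R) :
  {within [set p : R * R | 0 <= p.1 /\ 0 <= p.2],
        continuous (fun p : R * R => s p.1 p.2)} ->
  0 <= a -> 0 <= b -> c < s a b ->
  exists2 e : R, 0 < e & forall x y : R, 0 <= x -> 0 <= y ->
     `|a - x| < e -> `|b - y| < e -> c < s x y.
Proof.
move=> cs a0 b0 cab.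
have := cs (a, b) [set y | c < y].
have H : nbhs (s a b) [set y | c < y].
  by apply: open_nbhs_nbhs; split; [exact: open_gt|].
move=> /(_ H).
have [_|] := nbhs_subspaceP [set p : R * R | 0 <= p.1 /\ 0 <= p.2] (a, b); last first.
  by move=> []; split.
rewrite /= withinE /=.
case=> V + /[dup] eqV.
move=> /nbhs_ballP [e e0 He].
move=> eq2.
exists e => // x y x0 y0 ax bx.
have : V (x, y) by apply: He; split => /=; rewrite /ball /=.
move=> Vxy.
have : (V `&` [set p | 0 <= p.1 /\ 0 <= p.2]) (x, y) by split.
by rewrite -eq2 => -[].
Qed.

Definition Q (n k : nat) : R := n%:R / k.+1%:R.

Lemma Q_ge0 n k : 0 <= Q n k.
Proof. by rewrite /Q divr_ge0. Qed.

Lemma dense_Q (u v : R) : 0 <= u -> u < v -> exists n k, u < Q n k < v.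
Proof.
move=> u0 uv.
set k := Num.bound ((v - u)^-1).
have vu0 : 0 < v - u by rewrite subr_gt0.
have k1 : (v - u)^-1 < k.+1%:R.
  apply: lt_le_trans (archi_boundP _) _; first by rewrite invr_ge0 ltW.
  by rewrite ler_nat.
have k2 : 1 < (v - u) * k.+1%:R.
  by rewrite -[X in X < _](divff (lt0r_neq0 vu0)) ltr_pM2l.
set n := (Num.truncn (u * k.+1%:R)).+1.
have := truncn_itv (mulr_ge0 u0 (ler0n _ k.+1)) => /andP [t1 t2].
exists n, k; rewrite /Q ltr_pdivlMr ?ltr0Sn // ltr_pdivrMr ?ltr0Sn //.
apply/andP; split; first exact: t2.
rewrite /n -natr1.
lra.
Qed.

Lemma pick_close (a e : R) : 0 <= a -> 0 < e ->
  exists n k, Q n k <= a /\ a - Q n k < e.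
Proof.
move=> a0 e0.
have [->|ap] := eqVneq a 0.
  by exists 0%N, 0%N; rewrite /Q mul0r subrr.
have ap' : 0 < a by rewrite lt_neqAle eq_sym ap.
have [ae|ae] := leP (a - e) 0.
  have [n [k /andP [h1 h2]]] := dense_Q _ _ (lexx 0) ap'.
  by exists n, k; split; [exact: ltW | lra].
have aea : a - e < a by lra.
have [n [k /andP [h1 h2]]] := dense_Q _ _ (ltW ae) aea.
by exists n, k; split; [exact: ltW | lra].
Qed.

Lemma powR_cmp (c a b : R) : 0 < c -> (c `^ a <= c `^ b) = (a * ln c <= b * ln c).
Proof. by move=> c0; rewrite /powR gt_eqF // ler_expR. Qed.

Lemma param_le (a : R) : 2 `^ a <= 2 -> (2^-1) `^ a <= 2^-1 -> a = 1.
Proof.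
have two0 : (0 : R) < 2 by [].
have h0 : (0 : R) < 2^-1 by rewrite invr_gt0.
rewrite -{2}(powRr1 (ltW two0)) -{2}(powRr1 (ltW h0)).
rewrite !powR_cmp // ler_pM2r ?ln_gt0 ?ltr1n // ler_nM2r; last first.
  by apply: ln_lt0; rewrite h0 /= invf_lt1 // ltr1n.
by move=> *; apply/eqP; rewrite eq_le; apply/andP.
Qed.

Lemma param_ge (a : R) : 2 <= 2 `^ a -> 2^-1 <= (2^-1) `^ a -> a = 1.
Proof.
have two0 : (0 : R) < 2 by [].
have h0 : (0 : R) < 2^-1 by rewrite invr_gt0.
rewrite -{1}(powRr1 (ltW two0)) -{1}(powRr1 (ltW h0)).
rewrite !powR_cmp // ler_pM2r ?ln_gt0 ?ltr1n // ler_nM2r; last first.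
  by apply: ln_lt0; rewrite h0 /= invf_lt1 // ltr1n.
by move=> *; apply/eqP; rewrite eq_le; apply/andP.
Qed.

Lemma lt_sub (A x e : R) : A - e < x -> A - x < e.
Proof. by move=> h; lra. Qed.

End Aux.

Section Star.
Variable R : realType.
Variable s : R -> R -> R.
Hypothesis hs : star_hyp s.

Lemma s_mono a a' b b' : 0 <= a -> 0 <= b -> a <= a' -> b <= b' ->
  s a b <= s a' b'.
Proof. by case: hs => _ H _ _; exact: H. Qed.

Lemma s_ge0 a b : 0 <= a -> 0 <= b -> 0 <= s a b.
Proof. by case: hs => _ _ H _; exact: H. Qed.

Lemma s_lemin a b : 0 <= a -> 0 <= b -> s a b <= Num.min a b.
Proof. by case: hs => _ _ _ H; exact: H. Qed.

Lemma s_cont : {within [set p : R * R | 0 <= p.1 /\ 0 <= p.2],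
        continuous (fun p : R * R => s p.1 p.2)}.
Proof. by case: hs. Qed.

Local Open Scope ereal_scope.

Lemma estar_ge (q1 q2 : R) (a b : \bar R) : (0 <= q1)%R -> (0 <= q2)%R ->
  q1%:E <= a -> q2%:E <= b -> (s q1 q2)%:E <= estar s a b.
Proof.
move=> q10 q20; case: a => [a| |]; case: b => [b| |] //=;
  rewrite ?leeNy_eq ?lee_fin //= => ha hb.
- by apply: s_mono.
- have H : [set (s a n%:R)%:E | n in [set: nat]] (s a (Num.bound q2)%:R)%:E.
    by exists (Num.bound q2).
  apply: le_trans (ereal_sup_ubound H); rewrite lee_fin; apply: s_mono => //.
  exact/ltW/archi_boundP.
- have H : [set (s n%:R b)%:E | n in [set: nat]] (s (Num.bound q1)%:R b)%:E.
    by exists (Num.bound q1).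
  apply: le_trans (ereal_sup_ubound H); rewrite lee_fin; apply: s_mono => //.
  exact/ltW/archi_boundP.
- have H : [set (s n%:R n%:R)%:E | n in [set: nat]]
      (s (Num.bound (Num.max q1 q2))%:R (Num.bound (Num.max q1 q2))%:R)%:E.
    by exists (Num.bound (Num.max q1 q2)).
  have m0 : (0 <= Num.max q1 q2)%R by rewrite le_max q10.
  have := archi_boundP m0; rewrite gt_max => /andP [b1 b2].
  apply: le_trans (ereal_sup_ubound H); rewrite lee_fin; apply: s_mono => //;
    exact: ltW.
Qed.

Lemma estar_ge0 (a b : \bar R) : 0 <= a -> 0 <= b -> 0 <= estar s a b.
Proof.
move=> a0 b0; apply: le_trans (estar_ge 0 0 a b (lexx 0%R) (lexx 0%R) a0 b0).
by rewrite lee_fin s_ge0.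
Qed.

Lemma estar_gt_fin (a b r : R) : (0 <= a)%R -> (0 <= b)%R -> (r < s a b)%R ->
  exists n1 k1 n2 k2, [/\ (Q R n1 k1 <= a)%R, (Q R n2 k2 <= b)%R &
                          (r < s (Q R n1 k1) (Q R n2 k2))%R].
Proof.
move=> a0 b0 rab.
have [e e0 He] := cont_lb _ _ _ _ _ s_cont a0 b0 rab.
have [n1 [k1 [q1a q1e]]] := pick_close _ _ _ a0 e0.
have [n2 [k2 [q2b q2e]]] := pick_close _ _ _ b0 e0.
exists n1, k1, n2, k2; split => //; apply: He; rewrite ?Q_ge0 //.
- by rewrite ger0_norm // subr_ge0.
- by rewrite ger0_norm // subr_ge0.
Qed.

Lemma estar_gt (a b : \bar R) (r : R) : 0 <= a -> 0 <= b ->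
  r%:E < estar s a b ->
  exists n1 k1 n2 k2, [/\ (Q R n1 k1)%:E <= a, (Q R n2 k2)%:E <= b &
                          (r < s (Q R n1 k1) (Q R n2 k2))%R].
Proof.
case: a => [a| |]; case: b => [b| |] //=; rewrite ?lee_fin => a0 b0.
- rewrite lte_fin => /(estar_gt_fin _ _ _ a0 b0) [n1 [k1 [n2 [k2 [h1 h2 h3]]]]].
  by exists n1, k1, n2, k2; rewrite !lee_fin.
- move=> /ereal_sup_gt [_ [n _ <-]]; rewrite lte_fin.
  move=> /(estar_gt_fin _ _ _ a0 (ler0n _ n)) [n1 [k1 [n2 [k2 [h1 h2 h3]]]]].
  by exists n1, k1, n2, k2; rewrite !lee_fin ?leey.
- move=> /ereal_sup_gt [_ [n _ <-]]; rewrite lte_fin.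
  move=> /(estar_gt_fin _ _ _ (ler0n _ n) b0) [n1 [k1 [n2 [k2 [h1 h2 h3]]]]].
  by exists n1, k1, n2, k2; rewrite !lee_fin ?leey.
- move=> /ereal_sup_gt [_ [n _ <-]]; rewrite lte_fin.
  move=> /(estar_gt_fin _ _ _ (ler0n _ n) (ler0n _ n)) [n1 [k1 [n2 [k2 [h1 h2 h3]]]]].
  by exists n1, k1, n2, k2; rewrite ?leey.
Qed.

End Star.

Section Meas.
Local Open Scope ereal_scope.
Variables (R : realType) (s : R -> R -> R).
Hypothesis hs : star_hyp s.
Variables (d : measure_display) (X : measurableType d) (f1 f2 : X -> \bar R).
Hypotheses (hf1 : nonneg_measurable f1) (hf2 : nonneg_measurable f2).

Lemma level_meas (g : X -> \bar R) (y : \bar R) :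
  measurable_fun setT g -> measurable [set x | y <= g x].
Proof.
by move=> mg; have := emeasurable_fun_c_infty measurableT mg y; rewrite setTI.
Qed.

Let E x := estar s (f1 x) (f2 x).

Lemma E_gt_meas (r : R) : measurable [set x | r%:E < E x].
Proof.
case: hf1 => m1 p1; case: hf2 => m2 p2.
rewrite (_ : [set x | r%:E < E x] = \bigcup_n1 \bigcup_k1 \bigcup_n2 \bigcup_k2
   (if (r < s (Q R n1 k1) (Q R n2 k2))%R then
      [set x | (Q R n1 k1)%:E <= f1 x] `&` [set x | (Q R n2 k2)%:E <= f2 x]
    else set0)).
  apply: bigcupT_measurable => n1; apply: bigcupT_measurable => k1.
  apply: bigcupT_measurable => n2; apply: bigcupT_measurable => k2.
  case: ifP => _ //; apply: measurableI; exact: level_meas.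
apply/seteqP; split => x /=.
  move=> /(estar_gt _ _ hs _ _ _ (p1 x) (p2 x)) [n1 [k1 [n2 [k2 [h1 h2 h3]]]]].
  exists n1 => //; exists k1 => //; exists n2 => //; exists k2 => //.
  by rewrite h3.
move=> [n1 _ [k1 _ [n2 _ [k2 _]]]]; case: ifPn => // h [h1 h2].
apply: lt_le_trans (estar_ge _ _ hs _ _ _ _ (Q_ge0 _ _ _) (Q_ge0 _ _ _) h1 h2).
by rewrite lte_fin.
Qed.

Lemma E_ge0 x : 0 <= E x.
Proof. by case: hf1 => _ p1; case: hf2 => _ p2; exact: (estar_ge0 _ _ hs). Qed.

Lemma E_meas : measurable_fun setT E.
Proof.
apply: (measurability _ (ErealGenOInfty.measurableE R)) => //.
move=> _ [_ [r ->] <-].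
rewrite (_ : [set: X] `&` E @^-1` `]r%:E, +oo[%classic = [set x | r%:E < E x]).
  exact: E_gt_meas.
apply/seteqP; split => x /=.
  by move=> [_]; rewrite /preimage /= in_itv /= andbT.
by move=> h1; split => //; rewrite /preimage /= in_itv /= h1.
Qed.

End Meas.

Section SuSec.
Local Open Scope ereal_scope.
Variables (R : realType) (d : measure_display) (X : measurableType d).
Variable m : set X -> \bar R.
Hypothesis hm : monotone_measure m.

Lemma m_ge0 A : measurable A -> 0 <= m A.
Proof. by case: hm => H _ _ _; exact: H. Qed.

Lemma m_mono A B : measurable A -> measurable B -> A `<=` B -> m A <= m B.
Proof. by case: hm => _ _ _ H; exact: H. Qed.

Lemma Su_ub (g : X -> \bar R) (t : \bar R) : 0 < t ->
  Order.min t (m [set x | t <= g x]) <= Su m g.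
Proof. by move=> t0; apply: ereal_sup_ubound; exists t. Qed.

Lemma Su_ge0 (g : X -> \bar R) : measurable_fun setT g -> 0 <= Su m g.
Proof.
move=> mg; apply: le_trans (Su_ub g 1 lte01).
by rewrite le_min lee01 /= m_ge0 //; exact: level_meas.
Qed.

Lemma Su_approx (g : X -> \bar R) (y : \bar R) : measurable_fun setT g ->
  y < Su m g -> Su m g < +oo ->
  exists t : R, (0 < t)%R /\ y < Order.min t%:E (m [set x | t%:E <= g x]).
Proof.
move=> mg /ereal_sup_gt [_ [t t0 <-]] yt Sfin.
case: t t0 yt => [t| |] //.
  by move=> /= t0 yt; exists t; split => //; rewrite -lte_fin.
move=> _; rewrite min_r ?leey // => yt.
set L := [set x | +oo <= g x].
have mL : measurable L by exact: level_meas.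
have L0 : 0 <= m L by exact: m_ge0.
have Lfin : m L \is a fin_num.
  rewrite ge0_fin_numE //; apply: le_lt_trans Sfin.
  by have := Su_ub g +oo (ltry 0%R); rewrite min_r ?leey.
exists (fine (m L) + 1)%R; split.
  by rewrite ltr_wpDl ?fine_ge0.
apply: lt_le_trans yt _.
rewrite le_min; apply/andP; split.
  by rewrite -{1}(fineK Lfin) lee_fin lerDl.
apply: m_mono => //; first exact: level_meas.
by move=> x; rewrite /L /= leye_eq => /eqP ->; exact: leey.
Qed.

End SuSec.

Section Core.
Local Open Scope ereal_scope.
Variables (R : realType) (s : R -> R -> R).
Hypothesis hs : star_hyp s.
Variables (d : measure_display) (X : measurableType d) (f1 f2 : X -> \bar R).
Hypotheses (hf1 : nonneg_measurable f1) (hf2 : nonneg_measurable f2).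
Hypothesis hc : comonotone f1 f2.
Variable m : set X -> \bar R.
Hypothesis hm : monotone_measure m.
Variable w : R.
Hypothesis w0 : (0 < w)%R.

Let mge0 := @m_ge0 R d X m hm.
Let mmono := @m_mono R d X m hm.
Let Suge0 := @Su_ge0 R d X m hm.
Let Suub := @Su_ub R d X m.
Let smono := @s_mono R s hs.
Let sge0 := @s_ge0 R s hs.
Let slemin := @s_lemin R s hs.
Let estarge := @estar_ge R s hs.

Lemma powRK1 (a : R) : (0 <= a)%R -> ((a `^ w^-1) `^ w = a)%R.
Proof. by move=> a0; rewrite -powRrM mulVf ?gt_eqF // powRr1. Qed.

Lemma powRK2 (a : R) : (0 <= a)%R -> ((a `^ w) `^ w^-1 = a)%R.
Proof. by move=> a0; rewrite -powRrM mulfV ?gt_eqF // powRr1. Qed.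

Lemma pmono (r : R) (a b : \bar R) : (0 <= r)%R -> 0 <= a -> a <= b ->
  poweR a r <= poweR b r.
Proof.
move=> r0 a0 ab; apply: gt0_ler_poweR => //; rewrite in_itv /= leey andbT //.
exact: le_trans ab.
Qed.

Lemma t_le (t : R) (a : \bar R) : (0 <= t)%R -> 0 <= a ->
  t%:E <= poweR a w^-1 -> (t `^ w)%:E <= a.
Proof.
move=> t0; case: a => [a| _ _ |]; [ | exact: leey | by rewrite leeNy_eq].
rewrite !lee_fin /= => a0 ta; rewrite -(powRK1 _ a0).
by apply: ge0_ler_powR; rewrite ?nnegrE ?powR_ge0 // ltW.
Qed.

Let g1 x := poweR (f1 x) w^-1.
Let g2 x := poweR (f2 x) w^-1.
Let h x := poweR (estar s (f1 x) (f2 x)) w^-1.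

Lemma g1_meas : measurable_fun setT g1.
Proof. by case: hf1 => m1 _; exact (measurableT_comp (@measurable_poweR R w^-1) m1). Qed.
Lemma g2_meas : measurable_fun setT g2.
Proof. by case: hf2 => m2 _; exact (measurableT_comp (@measurable_poweR R w^-1) m2). Qed.
Lemma h_meas : measurable_fun setT h.
Proof. exact (measurableT_comp (@measurable_poweR R w^-1) (E_meas _ _ hs _ _ _ _ hf1 hf2)). Qed.

Lemma chain (t1 t2 : \bar R) :
  let L1 := [set x | t1 <= g1 x] in let L2 := [set x | t2 <= g2 x] in
  L1 `<=` L2 \/ L2 `<=` L1.
Proof.
move=> L1 L2.
have [H|H] := pselect (L1 `<=` L2); [by left|right].
move=> y L2y; apply: contrapT => nL1y; apply: H => x L1x.
apply: contrapT => nL2x.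
case: hf1 => _ p1; case: hf2 => _ p2.
have w0' : (0 <= w^-1)%R by rewrite invr_ge0 ltW.
have a1 : f1 y < f1 x.
  rewrite ltNge; apply/negP => xy; apply: nL1y.
  by apply: le_trans L1x _; exact: pmono.
have a2 : f2 x < f2 y.
  rewrite ltNge; apply/negP => xy; apply: nL2x.
  by apply: le_trans L2y _; exact: pmono.
exact: (hc y x).
Qed.

Lemma core (t1 t2 : R) : (0 < t1)%R -> (0 < t2)%R ->
  let c1 := Order.min t1%:E (m [set x | t1%:E <= g1 x]) in
  let c2 := Order.min t2%:E (m [set x | t2%:E <= g2 x]) in
  (s (fine c1 `^ w) (fine c2 `^ w))%:E <= poweR (Su m h) w.
Proof.
move=> t10 t20 /=.
set c1 := Order.min t1%:E _; set c2 := Order.min t2%:E _.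
set L1 := [set x | t1%:E <= g1 x]; set L2 := [set x | t2%:E <= g2 x].
have mL1 : measurable L1 by exact: level_meas g1_meas.
have mL2 : measurable L2 by exact: level_meas g2_meas.
have L10 := mge0 _ mL1; have L20 := mge0 _ mL2.
have c10 : 0 <= c1 by rewrite le_min L10 lee_fin ltW.
have c20 : 0 <= c2 by rewrite le_min L20 lee_fin ltW.
have c1t : c1 <= t1%:E by rewrite ge_min lexx.
have c2t : c2 <= t2%:E by rewrite ge_min lexx.
have c1f : c1 \is a fin_num by rewrite ge0_fin_numE // (le_lt_trans c1t) ?ltry.
have c2f : c2 \is a fin_num by rewrite ge0_fin_numE // (le_lt_trans c2t) ?ltry.
set r1 := fine c1; set r2 := fine c2.
have r10 : (0 <= r1)%R by rewrite fine_ge0.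
have r20 : (0 <= r2)%R by rewrite fine_ge0.
have r1t : (r1 <= t1)%R by rewrite -lee_fin fineK.
have r2t : (r2 <= t2)%R by rewrite -lee_fin fineK.
have r1m : r1%:E <= m L1 by rewrite fineK // ge_min lexx orbT.
have r2m : r2%:E <= m L2 by rewrite fineK // ge_min lexx orbT.
have Sh0 : 0 <= Su m h by exact: Suge0 _ h_meas.
have wr : forall r, (0 <= r)%R -> (0 <= r `^ w)%R by move=> r _; exact: powR_ge0.
have mon : forall a b : R, (0 <= a)%R -> (a <= b)%R -> (a `^ w <= b `^ w)%R.
  move=> a b a0 ab; apply: ge0_ler_powR => //; first exact: ltW.
  by rewrite nnegrE (le_trans a0).
set u := s (t1 `^ w) (t2 `^ w).
have su : (s (r1 `^ w) (r2 `^ w) <= u)%R by apply: smono _ _ _ _ _ _ _ _;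
  rewrite ?wr ?mon.
have u0 : (0 <= u)%R by apply: sge0; exact: powR_ge0.
have [u00|upos] := eqVneq u 0%R.
  by apply: le_trans (poweR_ge0 _ _); rewrite lee_fin -u00.
have upos' : (0 < u)%R by rewrite lt_neqAle eq_sym upos.
set tau := (u `^ w^-1)%:E.
have tau0 : 0 < tau by rewrite lte_fin powR_gt0.
have Lsub : L1 `&` L2 `<=` [set x | tau <= h x].
  move=> x [L1x L2x] /=.
  case: hf1 => _ p1; case: hf2 => _ p2.
  have e1 := t_le _ _ (ltW t10) (p1 x) L1x.
  have e2 := t_le _ _ (ltW t20) (p2 x) L2x.
  have := estarge _ _ _ _ (powR_ge0 _ _) (powR_ge0 _ _) e1 e2.
  rewrite -/u => uE; rewrite /tau -poweR_EFin /h.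
  apply: pmono; rewrite ?lee_fin //; by rewrite invr_ge0 ltW.
set M := m [set x | tau <= h x].
have mM : measurable [set x | tau <= h x] by exact: level_meas h_meas.
have M0 : 0 <= M by exact: mge0.
have LM : r1%:E <= M \/ r2%:E <= M.
  case: (chain t1%:E t2%:E) => [S|S]; [left|right].
  - apply: le_trans r1m _; apply: mmono => //.
    by move=> x L1x; apply: Lsub; split => //; exact: S.
  - apply: le_trans r2m _; apply: mmono => //.
    by move=> x L2x; apply: Lsub; split => //; exact: S.
have el := Suub h _ tau0.
apply: le_trans (pmono _ _ _ (ltW w0) _ el); last by rewrite le_min M0 ltW.
have [tM|Mt] := leP tau M.
  by rewrite /tau poweR_EFin powRK1 // lee_fin.
have smin := slemin _ _ (wr _ r10) (wr _ r20).
case: LM => LM.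
- apply: le_trans (pmono _ _ _ (ltW w0) _ LM); rewrite ?lee_fin //.
  by rewrite (le_trans smin) // ge_min lexx.
- apply: le_trans (pmono _ _ _ (ltW w0) _ LM); rewrite ?lee_fin //.
  by rewrite (le_trans smin) // ge_min lexx orbT.
Qed.

Lemma approx (g : X -> \bar R) (e : R) : measurable_fun setT g -> (0 < e)%R ->
  Su m g < +oo ->
  exists t : R, (0 < t)%R /\
   ((fine (Su m g)) `^ w - e < fine (Order.min t%:E (m [set x | (t%:E <= g x)%E])) `^ w)%R /\
   (fine (Order.min t%:E (m [set x | (t%:E <= g x)%E])) `^ w <= fine (Su m g) `^ w)%R.
Proof.
move=> mg e0 Sfin.
have S0 := Suge0 _ mg.
have Sf : Su m g \is a fin_num by rewrite ge0_fin_numE.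
set sv := fine (Su m g).
have sv0 : (0 <= sv)%R by rewrite fine_ge0.
have key : forall y : \bar R, y < Su m g ->
   (forall c : R, (0 <= c)%R -> y < c%:E -> (sv `^ w - e < c `^ w)%R) ->
   exists t : R, (0 < t)%R /\
   ((fine (Su m g)) `^ w - e < fine (Order.min t%:E (m [set x | (t%:E <= g x)%E])) `^ w)%R /\
   (fine (Order.min t%:E (m [set x | (t%:E <= g x)%E])) `^ w <= fine (Su m g) `^ w)%R.
  move=> y yS yc.
  have [t [t0 yt]] := Su_approx R d X m hm g y mg yS Sfin.
  exists t; split => //.
  set c := Order.min t%:E (m [set x | (t%:E <= g x)%E]) in yt *.
  have mL : measurable [set x | (t%:E <= g x)%E] by exact: level_meas.
  have c0 : 0 <= c by rewrite le_min mge0 // lee_fin ltW.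
  have ct : c <= t%:E by rewrite ge_min lexx.
  have cf : c \is a fin_num by rewrite ge0_fin_numE // (le_lt_trans ct) ?ltry.
  have cS : c <= Su m g by exact: Suub.
  split.
    by apply: yc; rewrite ?fine_ge0 ?fineK.
  apply: ge0_ler_powR; rewrite ?nnegrE ?fine_ge0 //; first exact: ltW.
  by rewrite -lee_fin !fineK.
have [neg|pos] := ltP (sv `^ w - e)%R 0%R.
  apply: (key (-1)%E); first by apply: lt_le_trans S0; rewrite lte_fin ltrN10.
  by move=> c c0 _; apply: lt_le_trans neg _; exact: powR_ge0.
apply: (key ((sv `^ w - e)%R `^ w^-1)%:E).
  rewrite -(fineK Sf) lte_fin -/sv.
  rewrite -[X in (_ < X)%R](powRK2 _ sv0).
  apply: gt0_ltr_powR; rewrite ?nnegrE ?powR_ge0 ?invr_gt0 //.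
  by rewrite ltrBlDr ltrDl.
move=> c c0; rewrite lte_fin => hc'.
rewrite -[X in (X < _)%R](powRK1 _ pos).
by apply: gt0_ltr_powR; rewrite ?nnegrE ?powR_ge0.
Qed.

End Core.

Lemma estar_EFin (R : realType) (s : R -> R -> R) (a b : R) :
  estar s a%:E b%:E = (s a b)%:E.
Proof. by []. Qed.

Theorem corollary3p8 (d : measure_display) (X : measurableType d)
  (R : realType) (f1 f2 : X -> \bar R) (s : R -> R -> R)
  (w0 w1 w2 xi0 xi1 xi2 : R) (m : set X -> \bar R) :
  nonneg_measurable f1 -> nonneg_measurable f2 -> comonotone f1 f2 ->
  star_hyp s ->
  0 < w0 -> 0 < w1 -> 0 < w2 -> 0 < xi0 -> 0 < xi1 -> 0 < xi2 ->
  (forall x : R, 0 <= x ->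
     [/\ x `^ (1 / (xi0 * w0)) <= x,
         x <= x `^ (1 / (xi1 * w1)),
         x <= x `^ (1 / (xi2 * w2)),
         x `^ (w1 / w0) <= x &
         x `^ (w2 / w0) <= x]) ->
  monotone_measure m ->
  (Su m (fun x => poweR (f1 x) xi1) < +oo)%E ->
  (Su m (fun x => poweR (f2 x) xi2) < +oo)%E ->
  (estar s (poweR (Su m (fun x => poweR (f1 x) xi1)) w1)
           (poweR (Su m (fun x => poweR (f2 x) xi2)) w2)
   <= poweR (Su m (fun x => poweR (estar s (f1 x) (f2 x)) xi0)) w0)%E.
Proof.
move=> hf1 hf2 hc hs w0p w1p w2p x0p x1p x2p hx hm S1lt S2lt.
have [a1 a2 a3 a4 a5] := hx 2 ltac:(by []).
have [b1 b2 b3 b4 b5] := hx 2^-1 ltac:(by rewrite invr_ge0).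
have inv1 : forall u v : R, 0 < v -> 1 / (u * v) = 1 -> u = v^-1.
  move=> u v v0 /eqP; rewrite div1r invr_eq1 => /eqP uv.
  by rewrite -[u](mulfK (lt0r_neq0 v0)) uv div1r.
have e0 := inv1 _ _ w0p (param_le _ _ a1 b1).
have e1 := inv1 _ _ w1p (param_ge _ _ a2 b2).
have e2 := inv1 _ _ w2p (param_ge _ _ a3 b3).
have e3 := divr1_eq (param_le _ _ a4 b4).
have e4 := divr1_eq (param_le _ _ a5 b5).
subst xi0 xi1 xi2 w1 w2.
set w := w0.
have mg1 : measurable_fun setT (fun x => poweR (f1 x) w^-1).
  by case: hf1 => m1 _; exact (measurableT_comp (@measurable_poweR R w^-1) m1).
have mg2 : measurable_fun setT (fun x => poweR (f2 x) w^-1).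
  by case: hf2 => m2 _; exact (measurableT_comp (@measurable_poweR R w^-1) m2).
have mh : measurable_fun setT (fun x => poweR (estar s (f1 x) (f2 x)) w^-1).
  exact (measurableT_comp (@measurable_poweR R w^-1)
     (E_meas _ _ hs _ _ _ _ hf1 hf2)).
have S10 := Su_ge0 _ _ _ _ hm _ mg1.
have S20 := Su_ge0 _ _ _ _ hm _ mg2.
have Sh0 := Su_ge0 _ _ _ _ hm _ mh.
have S1f : Su m (fun x => poweR (f1 x) w^-1) \is a fin_num.
  by rewrite ge0_fin_numE.
have S2f : Su m (fun x => poweR (f2 x) w^-1) \is a fin_num.
  by rewrite ge0_fin_numE.
set S1 := Su m (fun x => poweR (f1 x) w^-1) in S10 S1f S1lt *.
set S2 := Su m (fun x => poweR (f2 x) w^-1) in S20 S2f S2lt *.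
set Sh := Su m (fun x => poweR (estar s (f1 x) (f2 x)) w^-1) in Sh0 mh *.
rewrite -(fineK S1f) -(fineK S2f) !poweR_EFin estar_EFin.
have [Shy|Shlt] := eqVneq Sh +oo%E.
  by rewrite Shy poweRyr ?gt_eqF // leey.
have Shf : Sh \is a fin_num by rewrite ge0_fin_numE // ltey.
rewrite -(fineK Shf) poweR_EFin lee_fin leNgt; apply/negP => lt.
have [ee ee0 He] := cont_lb _ _ _ _ _ (s_cont _ _ hs) (powR_ge0 _ _) (powR_ge0 _ _) lt.
have [t1 [t10 [h11 h12]]] := approx _ _ _ _ hm _ w0p _ _ mg1 ee0 S1lt.
have [t2 [t20 [h21 h22]]] := approx _ _ _ _ hm _ w0p _ _ mg2 ee0 S2lt.
have := core _ _ hs _ _ _ _ hf1 hf2 hc _ hm _ w0p _ _ t10 t20 => /=.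
rewrite -/Sh -(fineK Shf) poweR_EFin lee_fin; apply/negP; rewrite -ltNge.
apply: He; [exact: powR_ge0 | exact: powR_ge0 | |].
  by rewrite ger0_norm ?subr_ge0 //; exact: lt_sub.
by rewrite ger0_norm ?subr_ge0 //; exact: lt_sub.
Qed.
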